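(* For any hypergraph PIN model on a $t$-uniform hypergraph $\mathcal H=(\mathcal M,\mathcal E)$, any $n\in\mathbb N$, and any function $\mathbf L$ of $X^n_{\mathcal M}$, $$\sum_{i=1}^m I(X_i^n;\mathbf L)\le t\,H(\mathbf L).$$
   Context: Let $\mathcal M=\{1,\dots,m\}$. A hypergraph PIN model is defined from a hypergraph $\mathcal H=(\mathcal M,\mathcal E)$, where $\mathcal E$ is a finite multiset of subsets (hyperedges) of $\mathcal M$. For $n\in\mathbb N$, $\mathcal E^{(n)}$ is the multiset with $n$ copies of each element of $\mathcal E$. Each $e\in\mathcal E^{(n)}$ carries an independent Bernoulli(1/2) random variable $\xi_e$, and $X^n_i=(\xi_e:e\in\mathcal E^{(n)},\ i\in e)$, with $X^n_{\mathcal M}=(X^n_1,\dots,X^n_m)$. $\mathcal H$ is $t$-uniform if every hyperedge has exactly $t$ elements. *)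

(* Defs.v *)
From mathcomp Require Import all_boot.
From Stdlib Require Import Reals.

Set Implicit Arguments.
Unset Strict Implicit.
Unset Printing Implicit Defensive.

Definition rsum (A : finType) (f : A -> R) : R := \big[Rplus/0%R]_(a : A) f a.

Definition log2 (x : R) : R := (ln x / ln 2)%R.

Section Info.
Variable Omega : finType.

Definition pmf (A : finType) (X : Omega -> A) (a : A) : R :=
  (INR #|[set w : Omega | X w == a]| / INR #|Omega|)%R.

(* Shannon entropy (bits), with 0 log 0 = 0 (automatic since 0 * _ = 0). *)
Definition entropy (A : finType) (X : Omega -> A) : R :=
  (- rsum (fun a : A => pmf X a * log2 (pmf X a)))%R.

Definition pairRV (A B : finType) (X : Omega -> A) (Y : Omega -> B) :
  Omega -> A * B := fun w => (X w, Y w).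

Definition mutinfo (A B : finType) (X : Omega -> A) (Y : Omega -> B) : R :=
  (entropy X + entropy Y - entropy (pairRV X Y))%R.
End Info.

(* A hypergraph on M = 'I_m is a finite multiset of hyperedges, given as a
   list E : seq {set 'I_m}.  The multiset E^(n) is indexed by pairs
   (j, c) : 'I_(size E) * 'I_n  (hyperedge number j, copy number c). *)
Definition hedge_idx (m : nat) (E : seq {set 'I_m}) (n : nat) : finType :=
  ('I_(size E) * 'I_n)%type.

(* Sample space: the independent uniform bits (xi_e) for e in E^(n). *)
Definition pin_space (m : nat) (E : seq {set 'I_m}) (n : nat) : finType :=
  {ffun hedge_idx E n -> bool}.

Definition hedge_of (m : nat) (E : seq {set 'I_m}) (n : nat)
  (e : hedge_idx E n) : {set 'I_m} := nth set0 E (val e.1).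

(* Value space of X_i^n: the tuple (xi_e : i in e), encoded as a finite
   function giving Some xi_e on the hyperedges containing i and None elsewhere. *)
Definition obs_space (m : nat) (E : seq {set 'I_m}) (n : nat) : finType :=
  {ffun hedge_idx E n -> option bool}.

Definition pinX (m : nat) (E : seq {set 'I_m}) (n : nat) (i : 'I_m)
  (xi : pin_space E n) : obs_space E n :=
  [ffun e => if i \in hedge_of e then Some (xi e) else None].

Definition pinXM (m : nat) (E : seq {set 'I_m}) (n : nat)
  (xi : pin_space E n) : {ffun 'I_m -> obs_space E n} :=
  [ffun i => pinX i xi].

Definition uniform_hg (m : nat) (E : seq {set 'I_m}) (t : nat) : bool :=
  all (fun e : {set 'I_m} => #|e| == t) E.

(* Main.v *)
Require Import Defs.
From mathcomp Require Import all_boot.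
From Stdlib Require Import Reals.
From mathcomp Require all_order all_algebra Rstruct.
From mathcomp Require ring lra.
Set Implicit Arguments.
Unset Strict Implicit.
Unset Printing Implicit Defensive.
Module Aux.
From Stdlib Require Lra.
Import all_order all_algebra GRing.Theory Num.Theory Order.TTheory Rstruct ring lra.
Local Open Scope ring_scope.

Local Notation two := (IZR (Zpos (xO xH))).
Lemma ln_divR (a b : R) : 0 < a -> 0 < b -> ln (a / b) = ln a - ln b.
Proof.
move=> /RltP a0 /RltP b0.
change (ln (Rmult a (Rinv b)) = ln a - ln b).
rewrite ln_mult //; last by apply: Rinv_0_lt_compat.
by rewrite ln_Rinv.
Qed.

Section Info.
Variable Omega : finType.

Definition kk (A : finType) (X : Omega -> A) (w : Omega) : nat :=
  #|[set w' | X w' == X w]|.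
Definition GG (A : finType) (X : Omega -> A) : R :=
  \sum_w ln (kk X w)%:R.

Lemma kk_gt0 (A : finType) (X : Omega -> A) w : (0 < kk X w)%nat.
Proof. by apply/card_gt0P; exists w; rewrite inE. Qed.

Lemma kkR_gt0 (A : finType) (X : Omega -> A) w : (0 : R) < (kk X w)%:R.
Proof. by rewrite ltr0n kk_gt0. Qed.

Lemma kkR (A : finType) (X : Omega -> A) w :
  (kk X w)%:R = \sum_(u | X u == X w) (1 : R).
Proof.
rewrite /kk sumr_const; congr (_ *+ _).
by apply: eq_card => u; rewrite inE.
Qed.

Lemma kk_eq (A : finType) (X : Omega -> A) w w' : X w = X w' -> kk X w = kk X w'.
Proof. by rewrite /kk => ->. Qed.

Lemma GG_ker (A B : finType) (X : Omega -> A) (Y : Omega -> B) :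
  (forall w w', X w = X w' <-> Y w = Y w') -> GG X = GG Y.
Proof.
move=> H; apply: eq_bigr => w _; congr (ln _%:R).
apply: eq_card => u; rewrite !inE.
by apply/eqP/eqP => /H.
Qed.

Lemma ln_le_sub1 (x : R) : 0 < x -> ln x <= x - 1.
Proof.
move=> /RltP x0; apply/RleP; change (Rle (ln x) (Rminus x 1)).
have := exp_ineq1_le (ln x); rewrite exp_ln //.
move=> h; Lra.lra.
Qed.

Lemma rsumE (A : finType) (f : A -> R) : rsum f = \sum_a f a.
Proof. by []. Qed.

Lemma sum_part (A : finType) (X : Omega -> A) (g : A -> R) :
  \sum_w g (X w) = \sum_a (#|[set w | X w == a]|)%:R * g a.
Proof.
rewrite (partition_big X xpredT) //=; apply: eq_bigr => a _.
rewrite (eq_bigr (fun _ => g a)); last by move=> w /eqP ->.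
rewrite sumr_const mulr_natl; congr (_ *+ _).
by apply: eq_card => w; rewrite inE.
Qed.

Lemma entropyE (A : finType) (X : Omega -> A) : (0 < #|Omega|)%nat ->
  entropy X = (#|Omega|%:R * ln #|Omega|%:R - GG X) / (#|Omega|%:R * ln two).
Proof.
move=> N0.
set N : R := #|Omega|%:R.
have N0R : 0 < N by rewrite ltr0n.
have l2 : 0 < ln two.
  apply/RltP; have h := ln_lt_2; change (Rlt 0 (ln two)); Lra.lra.
pose g (a : A) := (ln (#|[set w | X w == a]|)%:R - ln N) / (N * ln two).
have step : \sum_a pmf X a * log2 (pmf X a) = \sum_w g (X w).
  rewrite sum_part; apply: eq_bigr => a _.
  rewrite /pmf /log2 !INRE !RdivE -/N /g.
  have [c0|cpos] := posnP #|[set w | X w == a]|.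
    by rewrite c0 !mul0r.
  have cR : (0:R) < (#|[set w | X w == a]|)%:R by rewrite ltr0n.
  rewrite ln_divR //.
  by rewrite invfM !mulrA [_ / N * _]mulrAC.
rewrite /entropy rsumE step /g -mulr_suml sumrB sumr_const.
rewrite /GG -/N -[ln N *+ _]mulr_natl -/N.
by rewrite RoppE -mulNr opprB.
Qed.

Lemma lnM (a b : R) : 0 < a -> 0 < b -> ln (a * b) = ln a + ln b.
Proof. by move=> /RltP a0 /RltP b0; change (ln (Rmult a b) = ln a + ln b); rewrite ln_mult. Qed.

Section Submod.
Variables (A1 A2 B : finType) (P1 : Omega -> A1) (P2 : Omega -> A2)
  (Z : Omega -> B).
Hypothesis hZ1 : forall w w', P1 w = P1 w' -> Z w = Z w'.
Hypothesis hZ2 : forall w w', P2 w = P2 w' -> Z w = Z w'.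

Let P3 := pairRV P1 P2.
Let k1 w : R := (kk P1 w)%:R.
Let k2 w : R := (kk P2 w)%:R.
Let k3 w : R := (kk P3 w)%:R.
Let k4 w : R := (kk Z w)%:R.
Let c w : R := (k3 w * k4 w)^-1.

Lemma inner_bound u v :
  \sum_w (if (P1 u == P1 w) && (P2 v == P2 w) then c w else 0)
  <= (if Z v == Z u then (k4 u)^-1 else 0).
Proof.
case: (pickP (fun w => (P1 u == P1 w) && (P2 v == P2 w))) =>
  [w0 /andP[/eqP h1 /eqP h2] | none].
- have -> : Z v == Z u.
    by rewrite (hZ1 h1) (hZ2 h2).
  rewrite (eq_bigr (fun w => if P3 w == P3 w0 then (k3 w0 * k4 u)^-1 else 0)).
    rewrite -big_mkcond sumr_const /=.
    have -> : #|[pred w | P3 w == P3 w0]| = kk P3 w0.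
      by apply: eq_card => w; rewrite !inE.
    rewrite -/(k3 w0) -mulr_natl -/(k3 w0) invfM mulrA mulfV ?mul1r //.
    by rewrite lt0r_neq0 // kkR_gt0.
  move=> w _.
  have -> : ((P1 u == P1 w) && (P2 v == P2 w)) = (P3 w == P3 w0).
    by rewrite /P3 /pairRV xpair_eqE h1 h2 ![_ == P1 w]eq_sym ![_ == P2 w]eq_sym.
  case: eqP => // /pair_equal_spec [e1 e2].
  rewrite /c /k3 (kk_eq (w := w) (w' := w0)); last by rewrite /P3 /pairRV e1 e2.
  by rewrite /k4 (kk_eq (w := w) (w' := u)) //; apply: hZ1; rewrite e1 h1.
- rewrite big1; last by move=> w _; rewrite none.
  by case: ifP => // _; rewrite invr_ge0 ler0n.
Qed.


Lemma sum_r_le :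
  \sum_w (k1 w * k2 w * c w) <= #|Omega|%:R.
Proof.
have rE w : k1 w * k2 w * c w =
    \sum_u \sum_v (if (P1 u == P1 w) && (P2 v == P2 w) then c w else 0).
  rewrite /k1 kkR !mulr_suml big_mkcond; apply: eq_bigr => u _.
  rewrite eq_sym; case: eqP => _ /=; last by rewrite big1.
  rewrite mul1r /k2 kkR mulr_suml big_mkcond; apply: eq_bigr => v _.
  by rewrite eq_sym; case: eqP; rewrite ?mul1r.
rewrite (eq_bigr _ (fun w _ => rE w)) exchange_big /=.
rewrite (eq_bigr (fun u => \sum_v \sum_w
   (if (P1 u == P1 w) && (P2 v == P2 w) then c w else 0))); last first.
  by move=> u _; rewrite exchange_big.
apply: (@le_trans _ _ (\sum_(u : Omega) (1 : R))); last first.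
  by rewrite sumr_const.
apply: ler_sum => u _.
apply: (@le_trans _ _ (\sum_v (if Z v == Z u then (k4 u)^-1 else 0))).
  by apply: ler_sum => v _; apply: inner_bound.
rewrite -big_mkcond sumr_const /=.
have -> : #|[pred v | Z v == Z u]| = kk Z u.
  by apply: eq_card => w; rewrite !inE.
by rewrite -mulr_natl mulfV // lt0r_neq0 // kkR_gt0.
Qed.

Lemma submod : GG P1 + GG P2 <= GG P3 + GG Z.
Proof.
have H : \sum_w (ln (k1 w) + ln (k2 w) - (ln (k3 w) + ln (k4 w))) <= 0.
  apply: (@le_trans _ _ (\sum_w (k1 w * k2 w * c w - 1))).
    apply: ler_sum => w _.
    have p1 := kkR_gt0 P1 w; have p2 := kkR_gt0 P2 w.
    have p3 := kkR_gt0 P3 w; have p4 := kkR_gt0 Z w.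
    rewrite -lnM // -lnM // -ln_divR ?mulr_gt0 //.
    by apply: ln_le_sub1; rewrite divr_gt0 ?mulr_gt0.
  rewrite sumrB sumr_const subr_le0.
  exact: (le_trans sum_r_le).
move: H; rewrite sumrB !big_split /= subr_le0.
by [].
Qed.

End Submod.

End Info.

Section Restr.
Variable J : finType.
Local Notation Om := {ffun J -> bool}.
Variable T : finType.
Variable L : Om -> T.

Definition restr (S : {set J}) (w : Om) : {ffun J -> option bool} :=
  [ffun e => if e \in S then Some (w e) else None].

Lemma restrE (S : {set J}) w w' :
  (restr S w' == restr S w) = [forall x in S, w' x == w x].
Proof.
apply/eqP/forall_inP => [h x xS | h].
  by have := congr1 (fun f : {ffun J -> option bool} => f x) h; rewrite !ffunE xS => -[->].
apply/ffunP => x; rewrite !ffunE; case: ifP => // xS.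
by rewrite (eqP (h x xS)).
Qed.

Lemma restr_sub (S S' : {set J}) w w' : S \subset S' ->
  restr S' w = restr S' w' -> restr S w = restr S w'.
Proof.
move=> sub /eqP; rewrite restrE => /forall_inP h; apply/eqP; rewrite restrE.
by apply/forall_inP => x xS; apply: h; apply: (subsetP sub).
Qed.

Definition flip (e : J) (w : Om) : Om :=
  [ffun x => if x == e then ~~ w x else w x].

Lemma flipK e : involutive (flip e).
Proof.
by move=> w; apply/ffunP => x; rewrite !ffunE; case: eqP => //; rewrite negbK.
Qed.

Lemma kk_restr_split (A : {set J}) e w : e \notin A ->
  kk (restr A) w = (2 * kk (restr (e |: A)) w)%nat.
Proof.
move=> eA.
set S0 := [set w' | restr A w' == restr A w].
set S1 := [set w' | restr (e |: A) w' == restr (e |: A) w].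
have s10 : S1 \subset S0.
  apply/subsetP => x; rewrite !inE => /eqP h; apply/eqP.
  by apply: restr_sub h; apply/subsetP => y yA; rewrite !inE yA orbT.
have S2E : S0 :\: S1 = flip e @: S1.
  apply/setP => x; apply/idP/idP.
  - rewrite !inE !restrE => /andP [/forall_inP h1 /forall_inP h0].
    apply/imsetP; exists (flip e x); last by rewrite flipK.
    rewrite inE restrE; apply/forall_inP => y; rewrite !inE ffunE.
    case/orP => [/eqP -> | yA]; last first.
      have -> : (y == e) = false by apply/eqP => ye; move: eA; rewrite -ye yA.
      exact: h0.
    have xe : x e != w e.
      apply/negP => xe; apply: h1 => z; rewrite !inE => /orP [/eqP -> // | zA].
      exact: h0.
    rewrite ifT ?eqxx //; by case: (x e) (w e) xe => -[].
  - case/imsetP => y; rewrite inE !restrE => /forall_inP h ->.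
    rewrite !inE !restrE; apply/andP; split.
      apply/negP => /forall_inP /(_ e); rewrite !inE eqxx ffunE eqxx => /(_ isT).
      by rewrite -(eqP (h e _)) ?inE ?eqxx //; case: (y e).
    apply/forall_inP => z zA; rewrite ffunE.
    have -> : (z == e) = false by apply/eqP => ze; move: eA; rewrite -ze zA.
    by apply: h; rewrite !inE zA orbT.
have := cardsID S1 S0.
rewrite S2E card_imset; last by apply: (can_inj (flipK e)).
have -> : S0 :&: S1 = S1 by apply/setIidPr.
by rewrite /kk -/S0 -/S1 => <-; rewrite mul2n -addnn.
Qed.


Let N : R := #|Om|%:R.

Definition FF (S : {set J}) :=
  N * ln N - GG (restr S) - GG L + GG (pairRV (restr S) L).

Lemma GG_inj (A : finType) (X : Om -> A) : injective X -> GG X = 0.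
Proof.
move=> inj; rewrite /GG big1 // => w _.
have -> : kk X w = 1%nat.
  rewrite /kk (_ : [set u | X u == X w] = [set w]) ?cards1 //.
  by apply/setP => u; rewrite !inE; apply/eqP/eqP => [/inj|->].
by rewrite ln_1.
Qed.

Lemma restrT_inj : injective (restr setT).
Proof.
move=> w w' /eqP; rewrite restrE => /forall_inP h.
by apply/ffunP => x; apply/eqP; apply: h; rewrite inE.
Qed.

Lemma FFT : FF setT = N * ln N - GG L.
Proof.
rewrite /FF (GG_inj restrT_inj) (@GG_inj _ (pairRV (restr setT) L)).
  by rewrite subr0 addr0.
by move=> w w' [] /restrT_inj.
Qed.

Lemma FF0 : FF set0 = 0.
Proof.
have r0 w w' : restr set0 w = restr set0 w'.
  by apply/ffunP => x; rewrite !ffunE inE.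
rewrite /FF; have -> : GG (restr set0) = N * ln N.
  rewrite /GG (eq_bigr (fun _ => ln N)); last first.
    move=> w _; congr (ln _%:R).
    rewrite /kk (_ : [set u | restr set0 u == restr set0 w] = setT) ?cardsT //.
    by apply/setP => u; rewrite !inE (r0 u w) eqxx.
  by rewrite sumr_const -mulr_natl.
have -> : GG (pairRV (restr set0) L) = GG L.
  apply: GG_ker => w w'; rewrite /pairRV; split; first by case.
  by move=> ->; rewrite (r0 w w').
by rewrite subrr sub0r addNr.
Qed.

Lemma GG_split (A : {set J}) e : e \notin A ->
  GG (restr A) = GG (restr (e |: A)) + N * ln 2%:R.
Proof.
move=> eA; rewrite /GG (eq_bigr (fun w => ln (kk (restr (e |: A)) w)%:R + ln 2%:R)).
  by rewrite big_split sumr_const /= mulr_natl.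
move=> w _; rewrite (kk_restr_split w eA) natrM lnM.
- by rewrite addrC.
- by rewrite ltr0n.
- by rewrite ltr0n kk_gt0.
Qed.

Lemma FF_incr (A B : {set J}) e : A \subset B -> e \notin B ->
  FF (e |: A) - FF A <= FF (e |: B) - FF B.
Proof.
move=> AB eB.
have eA : e \notin A by apply: contra eB; apply: (subsetP AB).
rewrite /FF (GG_split eA) (GG_split eB).
set P1 := pairRV (restr (e |: A)) L.
set P2 := pairRV (restr B) L.
set Z := pairRV (restr A) L.
have h1 : forall w w', P1 w = P1 w' -> Z w = Z w'.
  move=> w w' [] E1 E2; rewrite /Z /pairRV E2 (restr_sub _ E1) //.
  by apply/subsetP => x xA; rewrite !inE xA orbT.
have h2 : forall w w', P2 w = P2 w' -> Z w = Z w'.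
  by move=> w w' [] E1 E2; rewrite /Z /pairRV E2 (restr_sub AB E1).
have := submod h1 h2.
have -> : GG (pairRV P1 P2) = GG (pairRV (restr (e |: B)) L).
  apply: GG_ker => w w'; rewrite /P1 /P2 /pairRV; split.
    case=> E1 E2 E3 _; rewrite E2; congr (_, _); apply/eqP; rewrite restrE.
    move: E1 E3 => /eqP; rewrite restrE => /forall_inP ha.
    move=> /eqP; rewrite restrE => /forall_inP hb.
    apply/forall_inP => x; rewrite !inE => /orP [xe|xB].
      by apply: ha; rewrite !inE xe.
    exact: hb.
  case=> E1 E2; move: E1 => /eqP; rewrite restrE => /forall_inP h; rewrite E2.
  have -> : restr (e |: A) w = restr (e |: A) w'.
    apply/eqP; rewrite restrE; apply/forall_inP => x.
    by rewrite !inE => /orP [xe|xA]; apply: h; rewrite !inE ?xe // (subsetP AB) ?orbT.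
  have -> // : restr B w = restr B w'.
  apply/eqP; rewrite restrE; apply/forall_inP => x xB.
  by apply: h; rewrite !inE xB orbT.
rewrite -/P1 -/P2 -/Z.
move: (GG P1) (GG P2) (GG Z) (GG (pairRV (restr (e |: B)) L))
  (GG (restr (e |: A))) (GG (restr (e |: B))) (GG L) (N * ln N) (N * ln 2%:R).
move=> a b c d f g h i j H.
clear -H. lra.
Qed.


Lemma ind_sum (I : finType) (S : I -> {set J}) (t : nat) :
  (forall e, #|[set i | e \in S i]| = t) ->
  forall s : seq J, uniq s ->
  \sum_i FF (S i :&: [set x in s]) <= t%:R * FF [set x in s].
Proof.
move=> hdeg; elim => [|e s IH] /=.
  move=> _; have -> : [set x in [::]] = set0 :> {set J}.
    by apply/setP => x; rewrite !inE.
  rewrite (eq_bigr (fun _ => 0)); last by move=> i _; rewrite setI0 FF0.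
  by rewrite big1 // FF0 mulr0.
case/andP => es us.
have UE : [set x in e :: s] = e |: [set x in s].
  by apply/setP => x; rewrite !inE.
have eU : e \notin [set x in s] by rewrite inE.
set U := [set x in s].
set D := FF (e |: U) - FF U.
apply: (@le_trans _ _ (\sum_i (FF (S i :&: U) + (if e \in S i then D else 0)))).
  rewrite UE; apply: ler_sum => i _.
  case: ifP => eS.
    have -> : S i :&: (e |: U) = e |: (S i :&: U).
      by apply/setP => x; rewrite !inE; case: eqP => // ->; rewrite eS.
    rewrite -lerBlDl; apply: FF_incr => //; exact: subsetIr.
  have -> : S i :&: (e |: U) = S i :&: U.
    by apply/setP => x; rewrite !inE; case: eqP => // ->; rewrite eS.
  by rewrite addr0.
rewrite big_split /= -big_mkcond sumr_const.
have -> : #|[pred i | e \in S i]| = t.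
  by rewrite -(hdeg e); apply: eq_card => i; rewrite !inE.
rewrite -[D *+ t]mulr_natl UE.
have := IH us; rewrite -/U /D mulrBr.
move: (\sum_i FF (S i :&: U)) (t%:R * FF U) (t%:R * FF (e |: U)) => a b c H.
lra.
Qed.

End Restr.

Lemma lemma4_aux (m t : nat) (E : seq {set 'I_m}) (n : nat)
  (T : finType) (L : {ffun 'I_m -> obs_space E n} -> T) :
  uniform_hg E t ->
  Rle (rsum (fun i : 'I_m =>
           mutinfo (pinX (n := n) i) (fun xi => L (pinXM xi))))
   (Rmult (INR t) (entropy (fun xi : pin_space E n => L (pinXM xi)))).
Proof.
move=> hu.
pose J := hedge_idx E n.
pose Lf := fun xi : {ffun J -> bool} => L (pinXM xi).
have N0 : (0 < #|{ffun J -> bool}|)%nat.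
  by apply/card_gt0P; exists [ffun => false].
pose S (i : 'I_m) := [set e : J | i \in hedge_of e].
have pr i w : pinX (E := E) (n := n) i w = restr (S i) w.
  by apply/ffunP => e; rewrite !ffunE inE.
have hX i : GG (pinX (E := E) (n := n) i) = GG (restr (S i)).
  apply: GG_ker => w w'; by rewrite !pr.
have hXL i : GG (pairRV (pinX (E := E) (n := n) i) Lf) = GG (pairRV (restr (S i)) Lf).
  apply: GG_ker => w w'; by rewrite /pairRV !pr.
set D := (#|{ffun J -> bool}|%:R * ln two).
have mE i : mutinfo (pinX (E := E) (n := n) i) Lf = FF Lf (S i) / D.
  rewrite /mutinfo !entropyE // hX hXL /FF -/D.
  rewrite RplusE RminusE.
  by rewrite -mulrDl -mulrBl; congr (_ / _); lra.
have hE : entropy Lf = FF Lf setT / D by rewrite entropyE // FFT.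
have hdeg e : #|[set i | e \in S i]| = t.
  have : hedge_of e \in E by apply: mem_nth; exact: ltn_ord.
  move: hu => /allP h /h /eqP <-.
  by apply: eq_card => i; rewrite !inE.
have := ind_sum Lf hdeg (enum_uniq J).
have -> : [set x in enum J] = setT by apply/setP => x; rewrite !inE mem_enum.
under eq_bigr do rewrite setIT.
move=> H.
change (Rle (\sum_i mutinfo (pinX (E := E) (n := n) i) Lf) (Rmult (INR t) (entropy Lf))).
rewrite (eq_bigr _ (fun i _ => mE i)) hE -mulr_suml INRE.
apply/RleP.
change ((\sum_i FF Lf (S i)) / D <= t%:R * (FF Lf setT / D)).
rewrite mulrA ler_wpM2r //.
rewrite invr_ge0 mulr_ge0 // ?ler0n //.
apply/RleP; have h := ln_lt_2; change (Rle 0 (ln two)); Lra.lra.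
Qed.

End Aux.

Theorem lemma4 (m t : nat) (E : seq {set 'I_m}) (n : nat)
  (T : finType) (L : {ffun 'I_m -> obs_space E n} -> T) :
  uniform_hg E t ->
  (rsum (fun i : 'I_m =>
           mutinfo (pinX (n := n) i) (fun xi => L (pinXM xi)))
   <= INR t * entropy (fun xi : pin_space E n => L (pinXM xi)))%R.
Proof.
exact: Aux.lemma4_aux.
Qed.
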